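(* For every $n\ge2$, within the space of real CPS tensors in $\mathbb{R}^{n\times n\times n\times n}$, one has the strict inclusions \[ \vec S^{n^2\times n^2}_+\subsetneq PSD^{4,n}_+\subsetneq \mathbb{R}CPS^{n^4}_+ . \] Moreover, already among real symmetric tensors, $\vec S^{n^2\times n^2}_+$ is a proper subset of $\mathbb{R}CPS^{n^4}_+$.
   Context: A real tensor $\mathcal{A}\in\mathbb{R}^{n\times n\times n\times n}$ is (real) CPS if $\mathcal{A}_{ijkl}=\mathcal{A}_{klij}=\mathcal{A}_{jikl}=\mathcal{A}_{ijlk}$ for all indices; symmetric if invariant under all index permutations. For a real CPS $\mathcal{A}$: $\mathcal{A}\in\mathbb{R}CPS^{n^4}_+$ iff $\sum_{ijkl}\mathcal{A}_{ijkl}x_ix_jx_kx_l\ge0$ for all $x\in\mathbb{R}^n$; $\mathcal{A}\in\vec S^{n^2\times n^2}_+$ (matrix PSD) iff $\sum_{ijkl}\mathcal{A}_{ijkl}X_{ij}X_{kl}\ge0$ for all real symmetric $X\in\mathbb{R}^{n\times n}$; $\mathcal{A}\in PSD^{4,n}_+$ (general PSD) iff $\sum_{ijkl}\mathcal{A}_{ijkl}X_{ij}X_{kl}\ge0$ for all real symmetric positive semidefinite $X\in\mathbb{R}^{n\times n}$. *)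

(* Defs.v *)
From HB Require Import structures.
From mathcomp Require Import all_boot all_order all_algebra perm.
From mathcomp Require Import reals.
Set Implicit Arguments. Unset Strict Implicit. Unset Printing Implicit Defensive.
Import Order.TTheory GRing.Theory Num.Theory.
Local Open Scope ring_scope.

Definition tensor4 (R : Type) (n : nat) := 'I_n -> 'I_n -> 'I_n -> 'I_n -> R.

Section Defs.
Variables (R : realType) (n : nat).
Implicit Types (A : tensor4 R n).

Definition is_CPS A : Prop :=
  forall i j k l, A i j k l = A k l i j /\ A i j k l = A j i k l /\ A i j k l = A i j l k.

Definition entry A (f : 'I_4 -> 'I_n) : R :=
  A (f (inord 0)) (f (inord 1)) (f (inord 2)) (f (inord 3)).

Definition is_symmetric_tensor A : Prop :=
  forall (s : {perm 'I_4}) (f : 'I_4 -> 'I_n), entry A (f \o s) = entry A f.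

Definition tform A (x : 'I_n -> R) : R :=
  \sum_(i < n) \sum_(j < n) \sum_(k < n) \sum_(l < n) A i j k l * x i * x j * x k * x l.

Definition mform A (X : 'M[R]_n) : R :=
  \sum_(i < n) \sum_(j < n) \sum_(k < n) \sum_(l < n) A i j k l * X i j * X k l.

Definition sym_mx (X : 'M[R]_n) : Prop := X^T = X.

Definition psd_mx (X : 'M[R]_n) : Prop :=
  sym_mx X /\ forall v : 'cV[R]_n, 0 <= (v^T *m X *m v) ord0 ord0.

Definition in_RCPS_plus A : Prop := is_CPS A /\ forall x, 0 <= tform A x.
(* vec S^{n^2 x n^2}_+ (matrix PSD) *)
Definition in_matPSD A : Prop := is_CPS A /\ forall X, sym_mx X -> 0 <= mform A X.
(* PSD^{4,n}_+ (general PSD) *)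
Definition in_genPSD A : Prop := is_CPS A /\ forall X, psd_mx X -> 0 <= mform A X.

End Defs.

(* Main.v *)
Require Import Defs.
From HB Require Import structures.
From mathcomp Require Import all_boot all_order all_algebra perm.
From mathcomp Require Import reals ring lra.
Import Order.TTheory GRing.Theory Num.Theory.
Set Implicit Arguments. Unset Strict Implicit. Unset Printing Implicit Defensive.
Local Open Scope ring_scope.

Definition dl (R : realType) (n : nat) (a i : 'I_n) : R := if i == a then 1 else 0.

Lemma sum_dl (R : realType) (n : nat) (a : 'I_n) (F : 'I_n -> R) :
  \sum_i dl R a i * F i = F a.
Proof.
rewrite (bigD1 a) //= /dl eqxx mul1r big1 ?addr0 // => i /negbTE ->.
by rewrite mul0r.
Qed.

Definition gc (R : realType) (n : nat) (p0 p1 : 'I_n) (c0 c1 : R) (i : 'I_n) : R :=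
  c0 * dl R p0 i + c1 * dl R p1 i.

Lemma sum_gc (R : realType) (n : nat) (p0 p1 : 'I_n) (c0 c1 : R) (F : 'I_n -> R) :
  \sum_i gc p0 p1 c0 c1 i * F i = c0 * F p0 + c1 * F p1.
Proof.
rewrite (eq_bigr (fun i => c0 * (dl R p0 i * F i) + c1 * (dl R p1 i * F i))); last first.
  by move=> i _; rewrite /gc; ring.
by rewrite big_split /= -!big_distrr /= !sum_dl.
Qed.

Definition R4 (R : realType) (n : nat) (g1 g2 g3 g4 : 'I_n -> R) : tensor4 R n :=
  fun i j k l => g1 i * g2 j * g3 k * g4 l.

Lemma mform_R4 (R : realType) (n : nat) (g1 g2 g3 g4 : 'I_n -> R) X :
  mform (R4 g1 g2 g3 g4) X =
  (\sum_i g1 i * \sum_j g2 j * X i j) * (\sum_k g3 k * \sum_l g4 l * X k l).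
Proof.
rewrite /mform big_distrl; apply: eq_bigr => i _ /=.
rewrite (big_distrr (g1 i)) big_distrl; apply: eq_bigr => j _ /=.
rewrite big_distrr; apply: eq_bigr => k _ /=.
rewrite (big_distrr (g3 k)) big_distrr; apply: eq_bigr => l _ /=.
rewrite /R4; ring.
Qed.

Lemma tform_R4 (R : realType) (n : nat) (g1 g2 g3 g4 : 'I_n -> R) x :
  tform (R4 g1 g2 g3 g4) x =
  (\sum_i g1 i * x i) * (\sum_j g2 j * x j) * (\sum_k g3 k * x k) * (\sum_l g4 l * x l).
Proof.
rewrite /tform -!mulrA big_distrl; apply: eq_bigr => i _ /=.
rewrite big_distrl (big_distrr (g1 i * x i)); apply: eq_bigr => j _ /=.
rewrite big_distrl mulrA big_distrr; apply: eq_bigr => k _ /=.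
rewrite (big_distrr (g3 k * x k)) big_distrr; apply: eq_bigr => l _ /=.
rewrite /R4; ring.
Qed.

Lemma mformD (R : realType) (n : nat) (A B : tensor4 R n) X :
  mform (fun i j k l => A i j k l + B i j k l) X = mform A X + mform B X.
Proof.
rewrite /mform -big_split; apply: eq_bigr => i _ /=; rewrite -big_split; apply: eq_bigr => j _ /=.
rewrite -big_split; apply: eq_bigr => k _ /=; rewrite -big_split; apply: eq_bigr => l _ /=; ring.
Qed.

Lemma mformZ (R : realType) (n : nat) (c : R) (A : tensor4 R n) X :
  mform (fun i j k l => c * A i j k l) X = c * mform A X.
Proof.
rewrite /mform big_distrr; apply: eq_bigr => i _ /=; rewrite big_distrr; apply: eq_bigr => j _ /=.
rewrite big_distrr; apply: eq_bigr => k _ /=; rewrite big_distrr; apply: eq_bigr => l _ /=; ring.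
Qed.

Lemma tformD (R : realType) (n : nat) (A B : tensor4 R n) x :
  tform (fun i j k l => A i j k l + B i j k l) x = tform A x + tform B x.
Proof.
rewrite /tform -big_split; apply: eq_bigr => i _ /=; rewrite -big_split; apply: eq_bigr => j _ /=.
rewrite -big_split; apply: eq_bigr => k _ /=; rewrite -big_split; apply: eq_bigr => l _ /=; ring.
Qed.

Lemma tformZ (R : realType) (n : nat) (c : R) (A : tensor4 R n) x :
  tform (fun i j k l => c * A i j k l) x = c * tform A x.
Proof.
rewrite /tform big_distrr; apply: eq_bigr => i _ /=; rewrite big_distrr; apply: eq_bigr => j _ /=.
rewrite big_distrr; apply: eq_bigr => k _ /=; rewrite big_distrr; apply: eq_bigr => l _ /=; ring.
Qed.

Lemma quad_dl (R : realType) (n : nat) (X : 'M[R]_n) (a : 'I_n) :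
  ((\col_i dl R a i)^T *m X *m (\col_i dl R a i)) ord0 ord0 = X a a.
Proof.
rewrite mxE (eq_bigr (fun j => dl R a j * X a j)).
  by rewrite sum_dl.
move=> j _; rewrite !mxE mulrC; congr (_ * _).
rewrite (eq_bigr (fun l => dl R a l * X l j)) ?sum_dl // => l _.
by rewrite !mxE.
Qed.

Lemma entry_R4 (R : realType) (n : nat) (g : 'I_n -> R) f :
  entry (R4 g g g g) f = \prod_k g (f k).
Proof.
rewrite /entry /R4 !big_ord_recl big_ord0 mulr1 !mulrA.
have E : forall (a : 'I_4) b, val a = val b -> g (f a) = g (f b) by move=> a b /val_inj ->.
rewrite (E (inord 0) ord0); last by rewrite /= inordK.
rewrite (E (inord 1) (lift ord0 ord0)); last by rewrite /= inordK.
rewrite (E (inord 2) (lift ord0 (lift ord0 ord0))); last by rewrite /= inordK.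
by rewrite (E (inord 3) (lift ord0 (lift ord0 (lift ord0 ord0)))) // /= inordK.
Qed.

Lemma prodperm (R : realType) (n : nat) (g : 'I_n -> R) (f : 'I_4 -> 'I_n) (s : {perm 'I_4}) :
  \prod_k g (f (s k)) = \prod_k g (f k).
Proof. by rewrite [RHS](reindex_inj (@perm_inj _ s)). Qed.

Theorem mainTheorem19 (R : realType) (n : nat) (hn : (2 <= n)%N) :
  (forall A : tensor4 R n, in_matPSD A -> in_genPSD A) /\
  (forall A : tensor4 R n, in_genPSD A -> in_RCPS_plus A) /\
  (exists A : tensor4 R n, in_genPSD A /\ ~ in_matPSD A) /\
  (exists A : tensor4 R n, in_RCPS_plus A /\ ~ in_genPSD A) /\
  (exists A : tensor4 R n, is_symmetric_tensor A /\ in_RCPS_plus A /\ ~ in_matPSD A).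
Proof.
have h0 : (0 < n)%N by apply: ltnW.
pose p0 : 'I_n := Ordinal h0.
pose p1 : 'I_n := Ordinal hn.
have p01 : p0 != p1 by [].
have p10 : p1 != p0 by [].
pose e0 : 'I_n -> R := gc p0 p1 1 0.
pose e1 : 'I_n -> R := gc p0 p1 0 1.
pose Xd : 'M[R]_n := \matrix_(i, j) (dl R p0 i * dl R p0 j - dl R p1 i * dl R p1 j).
have Xd_sym : sym_mx Xd by apply/matrixP => i j; rewrite !mxE; ring.
have Xd00 : Xd p0 p0 = 1 by rewrite !mxE /dl eqxx (negbTE p01) /=; ring.
have Xd11 : Xd p1 p1 = -1 by rewrite !mxE /dl eqxx (negbTE p10) /=; ring.
have Xd01 : Xd p0 p1 = 0 by rewrite !mxE /dl eqxx (negbTE p01) (negbTE p10) /=; ring.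
have Xd10 : Xd p1 p0 = 0 by rewrite !mxE /dl eqxx (negbTE p01) (negbTE p10) /=; ring.
split.
  by move=> A [hc hA]; split=> // X [hX _]; exact: hA.
split.
  move=> A [hc hA]; split=> // x.
  pose X : 'M[R]_n := \matrix_(i, j) (x i * x j).
  have -> : tform A x = mform A X.
    rewrite /tform /mform; apply: eq_bigr => i _; apply: eq_bigr => j _.
    apply: eq_bigr => k _; apply: eq_bigr => l _; rewrite !mxE; ring.
  apply: hA; split; first by apply/matrixP => i j; rewrite !mxE mulrC.
  move=> v.
  have -> : (v^T *m X *m v) ord0 ord0 = (\sum_i v i ord0 * x i) ^+ 2.
    rewrite mxE expr2 big_distrl; apply: eq_bigr => k _ /=.
    rewrite !mxE big_distrr big_distrl; apply: eq_bigr => l _ /=.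
    rewrite !mxE; ring.
  exact: sqr_ge0.
split.
  pose A := fun i j k l => R4 e0 e0 e1 e1 i j k l + R4 e1 e1 e0 e0 i j k l.
  have hc : is_CPS A by move=> i j k l; rewrite /A /R4; split; [|split]; ring.
  have mE : forall X, mform A X = 2 * (X p0 p0 * X p1 p1).
    by move=> X; rewrite /A mformD !mform_R4 !sum_gc; ring.
  exists A; split.
    split=> // X [hX hp]; rewrite mE.
    apply: mulr_ge0 => //; apply: mulr_ge0; rewrite -quad_dl; exact: hp.
  move=> [_ hA]; have := hA Xd Xd_sym; rewrite mE Xd00 Xd11; lra.
split.
  pose A := fun i j k l => R4 e0 e1 e0 e1 i j k l + R4 e1 e0 e1 e0 i j k l
     + R4 e0 e1 e1 e0 i j k l + R4 e1 e0 e0 e1 i j k l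
     + (-2) * R4 e0 e0 e1 e1 i j k l + (-2) * R4 e1 e1 e0 e0 i j k l.
  have hc : is_CPS A by move=> i j k l; rewrite /A /R4; split; [|split]; ring.
  exists A; split.
    split=> // x; rewrite /A !tformD !tformZ !tform_R4 !sum_gc.
    rewrite le_eqVlt; apply/orP; left; apply/eqP; ring.
  move=> [_ hA].
  have hI : psd_mx (1%:M : 'M[R]_n).
    split; first by rewrite /sym_mx trmx1.
    move=> v; rewrite mulmx1 mxE; apply: sumr_ge0 => i _; rewrite !mxE -expr2.
    exact: sqr_ge0.
  have := hA _ hI.
  rewrite /A !mformD !mformZ !mform_R4 !sum_gc !mxE eqxx (negbTE p01) (negbTE p10) /=.
  lra.
pose u : 'I_n -> R := gc p0 p1 1 1.
pose v : 'I_n -> R := gc p0 p1 1 (-1).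
pose A := fun i j k l => R4 u u u u i j k l + R4 v v v v i j k l
   + (-2) * R4 e0 e0 e0 e0 i j k l + (-2) * R4 e1 e1 e1 e1 i j k l.
have hc : is_CPS A by move=> i j k l; rewrite /A /R4; split; [|split]; ring.
exists A; split.
  move=> s f.
  have eA : forall f, entry A f = entry (R4 u u u u) f + entry (R4 v v v v) f
     + (-2) * entry (R4 e0 e0 e0 e0) f + (-2) * entry (R4 e1 e1 e1 e1) f by [].
  by rewrite !eA !entry_R4 /= !prodperm.
split.
  split=> // x; rewrite /A !tformD !tformZ !tform_R4 !sum_gc.
  set a := x p0; set b := x p1.
  have -> : (1 * a + 1 * b) * (1 * a + 1 * b) * (1 * a + 1 * b) * (1 * a + 1 * b) +
    (1 * a + -1 * b) * (1 * a + -1 * b) * (1 * a + -1 * b) * (1 * a + -1 * b) +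
    -2 * ((1 * a + 0 * b) * (1 * a + 0 * b) * (1 * a + 0 * b) * (1 * a + 0 * b)) +
    -2 * ((0 * a + 1 * b) * (0 * a + 1 * b) * (0 * a + 1 * b) * (0 * a + 1 * b))
    = 12 * (a * b) ^+ 2 by ring.
  by apply: mulr_ge0 => //; exact: sqr_ge0.
move=> [_ hA]; have := hA Xd Xd_sym.
rewrite /A !mformD !mformZ !mform_R4 !sum_gc Xd00 Xd11 Xd01 Xd10.
lra.
Qed.
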